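(* Let $p$ be a prime. Suppose that every finite metabelian semi-$p$-abelian $p$-group is semi-$p^{2}$-abelian. Then every finite metabelian semi-$p$-abelian $p$-group is strongly semi-$p$-abelian.
   Context: Let $G$ be a finite $p$-group. For a positive integer $i$, $G$ is called semi-$p^{i}$-abelian if for all $a,b\in G$: $(ab)^{p^{i}}=1$ if and only if $a^{p^{i}}b^{p^{i}}=1$. $G$ is strongly semi-$p$-abelian if it is semi-$p^{i}$-abelian for every positive integer $i$. Metabelian means $G''=1$. *)

(* Defs.v *)
From mathcomp Require Import all_boot all_fingroup all_solvable pgroup commutator.
Set Implicit Arguments. Unset Strict Implicit. Unset Printing Implicit Defensive.
Local Open Scope group_scope.

Definition semi_pi_abelian (gT : finGroupType) (p i : nat) (G : {set gT}) : Prop :=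
  forall a b, a \in G -> b \in G ->
    ((a * b) ^+ (p ^ i) == 1) = (a ^+ (p ^ i) * b ^+ (p ^ i) == 1).

Definition strongly_semi_p_abelian (gT : finGroupType) (p : nat) (G : {set gT}) : Prop :=
  forall i, 0 < i -> semi_pi_abelian p i G.

Definition metabelian (gT : finGroupType) (G : {set gT}) : bool :=
  G^`(2) == 1.

(* Main.v *)
Require Import Defs.
From mathcomp Require Import all_boot all_fingroup all_solvable pgroup commutator.
Local Open Scope group_scope.

Section Aux.
Variable p : nat.
Hypothesis Hyp : forall (gT : finGroupType) (G : {group gT}),
     p.-group G -> metabelian G -> semi_pi_abelian p 1 G -> semi_pi_abelian p 2 G.

Lemma aux i : forall (gT : finGroupType) (G : {group gT}),
  p.-group G -> metabelian G -> semi_pi_abelian p 1 G -> semi_pi_abelian p i.+1 G.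
Proof.
elim: i => [|i IH] gT G pG mG s1 //.
have s2 := Hyp _ _ pG mG s1.
have s1' : forall a b, a \in G -> b \in G ->
    ((a * b) ^+ p == 1) = (a ^+ p * b ^+ p == 1).
  by move=> a b Ha Hb; have := s1 a b Ha Hb; rewrite expn1.
pose O := [set x in G | x ^+ p == 1].
have gO : group_set O.
  apply/group_setP; split; [|]; first by rewrite inE group1 expg1n eqxx.
  move=> x y; rewrite !inE => /andP[Gx /eqP x1] /andP[Gy /eqP y1].
  by rewrite groupM // s1' // x1 y1 mulg1 eqxx.
pose Og := Group gO.
have sOG : Og \subset G by apply/subsetP => x; rewrite inE => /andP[].
have nOG : G \subset 'N(Og).
  apply/subsetP => y Gy; rewrite inE; apply/subsetP => z.
  rewrite mem_conjg /= !inE => /andP[Gz /eqP z1].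
  have -> : z = (z ^ y^-1) ^ y by rewrite conjgKV.
  by rewrite groupJ // -conjXg z1 conj1g eqxx.
have Ocoset : forall x, x \in G -> (coset Og x == 1) = (x ^+ p == 1).
  move=> x Gx; apply/eqP/eqP.
    by move/(coset_idr (subsetP nOG x Gx)); rewrite inE => /andP[_ /eqP].
  by move=> x1; apply: coset_id; rewrite inE Gx x1 eqxx.
have pQ : p.-group (G / Og) by apply: quotient_pgroup.
have mQ : metabelian (G / Og).
  rewrite /metabelian -quotient_der //.
  by move: mG; rewrite /metabelian => /eqP ->; rewrite quotient1.
have s1Q : semi_pi_abelian p 1 (G / Og).
  move=> A B /morphimP[a Na Ga ->] /morphimP[b Nb Gb ->].
  rewrite expn1 -morphM // -!morphX ?groupM // -morphM ?groupX //.
  rewrite !Ocoset; rewrite ?groupM ?groupX //; last exact: groupM.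
  by rewrite -expgM mulnn s2 // s1' ?groupX // -!expgM mulnn.
have IHQ := IH _ _ pQ mQ s1Q.
move=> a b Ga Gb.
rewrite expnSr !expgM -!Ocoset ?groupM ?groupX //.
rewrite !morphX ?morphM ?groupM ?groupX //; try exact: (subsetP nOG).
rewrite IHQ ?mem_quotient //.
rewrite -!morphX ?(subsetP nOG) // -morphM ?groupX ?(subsetP nOG) //.
rewrite Ocoset ?groupM ?groupX // s1' ?groupX //.
all: try exact: groupM; by rewrite ?groupX.
Qed.
End Aux.

Theorem lemma2p3 (p : nat) (p_pr : prime p)
  (Hyp : forall (gT : finGroupType) (G : {group gT}),
     p.-group G -> metabelian G -> semi_pi_abelian p 1 G -> semi_pi_abelian p 2 G)
  (gT : finGroupType) (G : {group gT}) :
  p.-group G -> metabelian G -> semi_pi_abelian p 1 G -> strongly_semi_p_abelian p G.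
Proof.
move=> pG mG s1 [|i] // _.
exact: (@aux p Hyp i gT G pG mG s1).
Qed.
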